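(* Let $c\in K$ and let $P\in W[x]$ be nonzero, written (uniquely) as \[P=\sum_{i=r}^{N}(x-c)^i p_i(\vartheta_c),\qquad p_i\in K[t],\ p_r\neq 0,\ r,N\in\mathbb Z,\] and set $p_j=0$ for $j>N$. Let $s$ be a positive integer. Then $(x-c)^{-s}P$ (product in $W(x)$) lies in $W[x]$ if and only if either $r-s\ge 0$, or, with $m=s-r>0$, \[p_{r+k}(j)=0\quad\text{for all }0\le k\le m-1\text{ and all }0\le j\le m-1-k,\] i.e. $p_r(0)=\dots=p_r(m-1)=0$, $p_{r+1}(0)=\dots=p_{r+1}(m-2)=0$, $\dots$, $p_{r+m-1}(0)=0$.
   Context: $K$ is an algebraically closed field of characteristic $0$. $W[x]$ is the Weyl algebra, the $K$-algebra generated by $x$ and $\partial=d/dx$ with $[x,\partial]=-1$; $W(x)=K(x)[\partial]$. $\vartheta_c=(x-c)\partial$. *)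

(* Defs.v *)
From HB Require Import structures.
From mathcomp Require Import all_boot all_order all_algebra.
Set Implicit Arguments. Unset Strict Implicit. Unset Printing Implicit Defensive.
Import GRing.Theory.
Local Open Scope ring_scope.
Notation "x %:F" := (@FracField.tofrac _ x) : ring_scope.

Definition ratfun (K : fieldType) := {fraction {poly K}}.

Definition rderiv (K : fieldType) (f : ratfun K) : ratfun K :=
  let q := repr f in
  ((\n_q)^`() * \d_q - \n_q * (\d_q)^`())%:F / ((\d_q) ^+ 2)%:F.

(* W(x) = K(x)[d] : an operator sum_i a_i(x) d^i is stored as the
   polynomial (in the variable d) with coefficients a_i in K(x),
   coefficients written on the left. *)
Definition Wop (K : fieldType) := {poly ratfun K}.

(* product in W(x):  (a d^i)(b d^j) = a sum_k C(i,k) b^(k) d^(i+j-k) *)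
Definition wmul (K : fieldType) (A B : Wop K) : Wop K :=
  \sum_(i < size A) \sum_(j < size B) \sum_(k < i.+1)
     (A`_i * ('C(i, k))%:R * iter k (@rderiv K) B`_j) *: 'X^(i + j - k).

Definition wpow (K : fieldType) (A : Wop K) (n : nat) : Wop K :=
  iter n (wmul A) 1.

Definition wfun (K : fieldType) (f : ratfun K) : Wop K := f%:P.

Definition xmc (K : fieldType) (c : K) : ratfun K := ('X - c%:P)%:F.

Definition theta (K : fieldType) (c : K) : Wop K := xmc c *: 'X.

Definition peval_theta (K : fieldType) (c : K) (p : {poly K}) : Wop K :=
  \sum_(k < size p) ((p`_k)%:P)%:F *: wpow (theta c) k.

Definition inWx (K : fieldType) (A : Wop K) : Prop :=
  forall i : nat, exists q : {poly K}, A`_i = q%:F.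

(* Main.v *)
Require Import Defs.
From HB Require Import structures.
From mathcomp Require Import all_boot all_order all_algebra.
Import Order.TTheory GRing.Theory Num.Theory.
Local Open Scope ring_scope.

Lemma rderiv_tofrac (K : fieldType) (q : {poly K}) :
  rderiv (q%:F : ratfun K) = (q^`())%:F.
Proof.
rewrite /rderiv.
have hx : \n_(repr (q%:F : ratfun K)) = \d_(repr (q%:F : ratfun K)) * q.
  have := equivf_l (Ratio q 1).
  rewrite !numden_Ratio ?oner_neq0 // mulr1.
  by unlock tofrac.
have hd : \d_(repr (q%:F : ratfun K)) != 0 by apply: denom_ratioP.
move: hx hd.
set d := \d_(repr _); set n := \n_(repr _) => hx hd.
rewrite hx derivM.
have -> : ((d^`() * q + d * q^`()) * d - d * q * d^`()) = d ^+ 2 * q^`().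
  rewrite mulrDl expr2 -!mulrA [q * _]mulrC [q^`() * d]mulrC.
  by rewrite (mulrCA (d^`())) (mulrC (d^`()) q) [X in X - _]addrC addrK.
rewrite rmorphM /= mulrC mulKf //.
by rewrite tofrac_eq0 expf_neq0.
Qed.

Lemma wmul_wfun (K : fieldType) (f : ratfun K) (B : Wop K) :
  wmul (wfun f) B = f *: B.
Proof.
rewrite /wmul /wfun.
have [->|f0] := eqVneq f 0.
  by rewrite size_poly0 big_ord0 scale0r.
rewrite size_polyC f0 big_ord1.
rewrite -[in RHS](coefK B) poly_def scaler_sumr.
apply: eq_bigr => j _; rewrite big_ord1 coefC /= scalerA /= subn0 add0n.
by rewrite mulr1.
Qed.

Lemma xmc_neq0 (K : fieldType) (c : K) : xmc c != 0.
Proof. by rewrite /xmc tofrac_eq0 polyXsubC_eq0. Qed.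

Lemma wmul_theta (K : fieldType) (c : K) (B : Wop K) :
  wmul (theta c) B = xmc c *: ('X * B) + xmc c *: \poly_(j < size B) rderiv B`_j.
Proof.
rewrite /wmul /theta size_scale ?xmc_neq0 // size_polyX big_ord_recl big1; last first.
  move=> j _; rewrite big1 // => k _.
  by rewrite coefZ coefX /= mulr0 !mul0r scale0r.
rewrite add0r big_ord1 /=.
rewrite -[in 'X * B](coefK B) poly_def mulr_sumr !scaler_sumr poly_def scaler_sumr.
rewrite -big_split /=; apply: eq_bigr => j _.
rewrite big_ord_recr big_ord1 /= coefZ coefX /= mulr1 !mulr1.
rewrite -!scalerAr -exprS !scalerA /bump /= subn0 add1n subSS subn0.
by [].
Qed.

Fixpoint stir (l j : nat) : nat :=
  if l is l'.+1 then ((if j is j'.+1 then stir l' j' else 0) + j * stir l' j)%N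
  else (j == 0)%N.

Lemma rderiv0 (K : fieldType) : rderiv (0 : ratfun K) = 0.
Proof. by rewrite -(rmorph0 (@FracField.tofrac _)) rderiv_tofrac deriv0 rmorph0. Qed.

Lemma rderiv_xmc (K : fieldType) (c : K) (j n : nat) :
  rderiv (xmc c ^+ j *+ n) = xmc c ^+ j.-1 *+ (j * n).
Proof.
rewrite /xmc -rmorphXn -rmorphMn rderiv_tofrac derivMn deriv_exp derivXsubC mul1r.
by rewrite -mulrnA rmorphMn rmorphXn mulnC.
Qed.

Lemma wpow_theta_coef (K : fieldType) (c : K) (l j : nat) :
  (wpow (theta c) l)`_j = xmc c ^+ j *+ stir l j.
Proof.
elim: l j => [|l IH] j.
  by rewrite /wpow /= coef1; case: j => [|j] //=; rewrite expr0.
rewrite /wpow iterS -/(wpow _ l) wmul_theta coefD !coefZ coefXM coef_poly.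
have -> : (if (j < size (wpow (theta c) l))%N then rderiv (wpow (theta c) l)`_j else 0)
   = rderiv (wpow (theta c) l)`_j.
  case: ltnP => // hj; by rewrite nth_default // rderiv0.
rewrite !IH rderiv_xmc.
case: j => [|j] /=.
  by rewrite mulr0n !mulr0 addr0.
by rewrite !mulrnAr -!exprS -mulrnDr.
Qed.

Definition Acoef {K : fieldType} (q : {poly K}) (j : nat) : K :=
  \sum_(l < size q) q`_l *+ stir l j.

Lemma peval_theta_coef (K : fieldType) (c : K) (q : {poly K}) (j : nat) :
  (peval_theta c q)`_j = ((Acoef q j)%:P)%:F * xmc c ^+ j.
Proof.
rewrite /peval_theta /Acoef coef_sum !rmorph_sum mulr_suml.
apply: eq_bigr => l _.
by rewrite coefZ wpow_theta_coef !rmorphMn /= mulrnAl mulrnAr.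
Qed.

Lemma stir_gt (l j : nat) : (l < j)%N -> stir l j = 0%N.
Proof.
elim: l j => [|l IH] [|j] //= hj.
by rewrite IH // IH ?muln0 // ltnW.
Qed.

Lemma ffact_step (i j : nat) : (i ^_ j.+1 + j * i ^_ j = i * i ^_ j)%N.
Proof.
rewrite ffactnSr; case: (leqP j i) => h.
  by rewrite mulnC -mulnDl subnK // mulnC.
by rewrite ffact_small // !muln0.
Qed.

Lemma stir_ffact (l i B : nat) : (l < B)%N ->
  (\sum_(j < B) stir l j * i ^_ j)%N = (i ^ l)%N.
Proof.
elim: l B => [|l IH] [|B] // hB.
  by rewrite big_ord_recl /= ffactn0 big1 // => j _.
rewrite (eq_bigr (fun j : 'I_B.+1 => ((if val j is j'.+1 then stir l j' else 0) * i ^_ j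
   + j * stir l j * i ^_ j)%N)); last by move=> j _; rewrite /= mulnDl.
rewrite big_split /= big_ord_recl /= mul0n add0n.
rewrite big_ord_recr /= stir_gt // muln0 mul0n addn0.
rewrite -big_split /=.
rewrite (eq_bigr (fun j : 'I_B => i * (stir l j * i ^_ j))%N); last first.
  move=> j _; rewrite /bump /= add0n mulnCA (mulnC j) -mulnA -mulnDr.
  by rewrite ffact_step mulnCA.
by rewrite -big_distrr /= IH // expnS.
Qed.

Lemma horner_Acoef (K : fieldType) (q : {poly K}) (i B : nat) :
  (size q <= B)%N -> q.[i%:R] = \sum_(j < B) Acoef q j * (i ^_ j)%:R.
Proof.
move=> hB; rewrite horner_coef /Acoef.
transitivity (\sum_(j < B) \sum_(l < size q) q`_l *+ stir l j * (i ^_ j)%:R); last first.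
  by apply: eq_bigr => j _; rewrite mulr_suml.
rewrite exchange_big /=; apply: eq_bigr => l _.
rewrite -natrX -(@stir_ffact l i B (leq_trans (ltn_ord l) hB)) natr_sum mulr_sumr.
apply: eq_bigr => j _.
by rewrite natrM mulrA !mulr_natr.
Qed.

Lemma tri (K : fieldType) (hK : [pchar K] =i pred0) (q : {poly K}) (n : nat) :
  (forall j, (j < n)%N -> Acoef q j = 0) <-> (forall i, (i < n)%N -> q.[i%:R] = 0).
Proof.
have hB : (size q <= maxn (size q) n)%N by apply: leq_maxl.
have hnB : (n <= maxn (size q) n)%N by apply: leq_maxr.
split=> H.
  move=> i hi; rewrite (@horner_Acoef _ q i _ hB) big1 // => j _.
  case: (ltnP j n) => hj; first by rewrite H // mul0r.
  by rewrite ffact_small ?mulr0 // (leq_trans hi hj).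
elim/ltn_ind => i IH hi.
have hiB : (i < maxn (size q) n)%N by apply: leq_trans hi hnB.
have := H i hi; rewrite (@horner_Acoef _ q i _ hB) (bigD1 (Ordinal hiB)) //= big1; last first.
  move=> j /eqP hj; have hj' : val j != i by apply/eqP => e; apply: hj; apply: val_inj.
  case: (ltngtP j i) => h.
  - by rewrite IH ?mul0r // (ltn_trans h hi).
  - by rewrite ffact_small ?mulr0.
  - by exfalso; move/eqP: hj'; apply; exact: h.
rewrite addr0 ffactnn => /eqP; rewrite mulf_eq0 => /orP [/eqP //|].
move/(pcharf0P K) : hK => ->.
by rewrite eqn0Ngt fact_gt0.
Qed.

Lemma xmc_int_nat (K : fieldType) (c : K) (n : nat) :
  xmc c ^ (n%:Z) = ((('X - c%:P) ^+ n)%:F : ratfun K).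
Proof. by rewrite -exprnP /xmc rmorphXn. Qed.

Lemma laurent (K : fieldType) (c : K) (t : int) (L : nat) (a : nat -> K) :
  (exists q : {poly K}, \sum_(k < L) ((a k)%:P)%:F * xmc c ^ (t + k%:Z) = q%:F) <->
  (forall k, (k < L)%N -> t + k%:Z < 0 -> a k = 0).
Proof.
split.
  move=> [q hq] k hk htk.
  have ht : t < 0.
    apply: le_lt_trans htk; by rewrite lerDl.
  set M := absz t.
  have tM : t = - (M%:Z) by rewrite /M ltz0_abs // opprK.
  have e : (\sum_(k < L) (a k)%:P * ('X - c%:P) ^+ k)%:F
           = ((q * ('X - c%:P) ^+ M)%:F : ratfun K).
    rewrite rmorphM /= -hq mulr_suml rmorph_sum; apply: eq_bigr => k' _.
    rewrite rmorphM /= -mulrA; congr (_ * _).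
    rewrite -(@xmc_int_nat _ c M) -expfzDr ?xmc_neq0 // tM addrAC addNr add0r.
    by rewrite xmc_int_nat.
  move/eqP: e; rewrite tofrac_eq => /eqP /(congr1 (comp_poly ('X + c%:P))).
  rewrite rmorph_sum rmorphM /= rmorphXn /= comp_polyB comp_polyX comp_polyC addrK.
  move=> e2; have := congr1 (fun p : {poly K} => p`_k) e2; clear e2 => /=.
  have hkM : (k < M)%N.
    by move: htk; rewrite tM addrC subr_lt0 ltz_nat.
  rewrite coefMXn hkM.
  rewrite (eq_bigr (fun i : 'I_L => (a i) *: 'X^i)); last first.
    move=> i _; rewrite comp_polyM comp_polyC rmorphXn /= comp_polyB comp_polyX comp_polyC.
    by rewrite addrK mul_polyC.
  rewrite coef_sum (bigD1 (Ordinal hk)) //= coefZ coefXn eqxx mulr1 big1 ?addr0 //.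
  move=> j hj; rewrite coefZ coefXn.
  case: eqP => [e|]; last by rewrite mulr0.
  by case/eqP: hj; apply: val_inj.
move=> H.
exists (\sum_(k < L) (a k)%:P * ('X - c%:P) ^+ (absz (t + k%:Z))).
rewrite rmorph_sum; apply: eq_bigr => k _.
case: (ltP (t + k%:Z) 0) => h.
  by rewrite H // !rmorph0 !mul0r.
rewrite rmorphM /= -xmc_int_nat gez0_abs //.
Qed.

Lemma ineq (r : int) (j s k : nat) :
  (r + j%:Z - s%:Z + k%:Z < 0) = ((k + j)%:Z < s%:Z - r).
Proof.
rewrite ltrBrDl addrAC subr_lt0 PoszD -addrA [k%:Z + _]addrC.
by [].
Qed.

Lemma cond_n (u : int) (k : nat) :
  exists n : nat, forall j : nat, ((k + j)%:Z < u) = (j < n)%N.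
Proof.
case: (leP 0 (u - k%:Z)) => h.
  exists (absz (u - k%:Z)) => j.
  by rewrite -ltz_nat gez0_abs // ltrBrDl PoszD.
exists 0%N => j; rewrite ltn0; apply/negbTE; rewrite -leNgt.
rewrite subr_lt0 in h; apply: le_trans (ltW h) _.
by rewrite PoszD lerDl.
Qed.

Lemma Acoef0 (K : fieldType) j : Acoef (0 : {poly K}) j = 0.
Proof. by rewrite /Acoef size_poly0 big_ord0. Qed.


Theorem mainTheorem2 (K : closedFieldType) (hK : [pchar K] =i pred0)
  (c : K) (P : Wop K) (hPW : inWx P) (hP0 : P != 0)
  (r N : int) (p : int -> {poly K})
  (hpr : p r != 0) (hpN : forall j : int, N < j -> p j = 0)
  (hdec : P = \sum_(k < (absz (N - r)).+1)
                 wmul (wfun (xmc c ^ (r + k%:Z))) (peval_theta c (p (r + k%:Z))))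
  (s : nat) (hs : (0 < s)%N) :
  inWx (wmul (wfun (xmc c ^ (- s%:Z))) P) <->
  (0 <= r - s%:Z \/
   forall k j : nat, (k + j)%:Z < s%:Z - r -> (p (r + k%:Z)).[j%:R] = 0).
Proof.
have rN : r <= N.
  rewrite leNgt; apply/negP => h; move: hpr; by rewrite hpN // eqxx.
set L := (absz (N - r)).+1.
have pL : forall k : nat, (L <= k)%N -> p (r + k%:Z) = 0.
  move=> k hk; apply: hpN.
  have h0 : 0 <= N - r by rewrite subr_ge0.
  have : (N - r) < k%:Z by rewrite -(gez0_abs h0) ltz_nat.
  by rewrite ltrBlDl.
have coefE : forall j : nat, ((xmc c ^ (- s%:Z)) *: P)`_j = \sum_(k < L)
     ((Acoef (p (r + k%:Z)) j)%:P)%:F * xmc c ^ (r + j%:Z - s%:Z + k%:Z).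
  move=> j; rewrite hdec coefZ coef_sum mulr_sumr; apply: eq_bigr => k _.
  rewrite wmul_wfun coefZ peval_theta_coef exprnP.
  set a := ((Acoef _ j)%:P)%:F.
  rewrite (mulrCA (xmc c ^ (r + k%:Z)) a) (mulrCA (xmc c ^ (- s%:Z)) a); congr (_ * _).
  rewrite -!expfzDr ?xmc_neq0 //; congr (_ ^ _).
  by rewrite [LHS]addrC [RHS]addrAC [r + k%:Z + _]addrAC.
rewrite wmul_wfun.
have LHSiff : inWx ((xmc c ^ (- s%:Z)) *: P) <->
   (forall k j : nat, (k + j)%:Z < s%:Z - r -> Acoef (p (r + k%:Z)) j = 0).
  split.
    move=> H k j hkj; case: (ltnP k L) => hk; last by rewrite pL // Acoef0.
    have [q hq] := H j; rewrite coefE in hq.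
    have := (@laurent _ c (r + j%:Z - s%:Z) L (fun k => Acoef (p (r + k%:Z)) j)).1 (ex_intro _ q hq).
    by apply => //; rewrite ineq.
  move=> H j; rewrite coefE; apply/(@laurent _ c (r + j%:Z - s%:Z) L (fun k => Acoef (p (r + k%:Z)) j)).
  by move=> k hk; rewrite ineq; apply: H.
apply: iff_trans LHSiff _.
case: (leP 0 (r - s%:Z)) => hrs.
  split=> _; first by left.
  move=> k j hkj; exfalso.
  have : s%:Z - r <= 0 by rewrite subr_le0 -subr_ge0.
  by rewrite leNgt (le_lt_trans _ hkj).
split.
  move=> H; right => k j; have [n hn] := cond_n (s%:Z - r) k.
  rewrite hn; move: j; apply/(@tri _ hK _ n) => j hj; apply: H; by rewrite hn.
case => [//|H].
move=> k j; have [n hn] := cond_n (s%:Z - r) k.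
rewrite hn; move: j; apply/(@tri _ hK _ n) => i hi; apply: H; by rewrite hn.
Qed.
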